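(* Let $K, L \subset \mathbb{R}^m$ be proper cones. Suppose that $K$ is an $L$-isotone projection set, and that at least one of the sets $\operatorname{int}(K^* )\cap L$ or $\operatorname{int}(K^* )\cap L^*$ is nonempty. Then $K$ is subdual and $K\subset L\subset K^*$.
   Context: $\mathbb{R}^m$ carries the standard inner product $\langle\cdot,\cdot\rangle$ and Euclidean norm. A convex cone $K$ is a nonempty set with $K+K\subset K$ and $tK\subset K$ for all $t\ge 0$; it is pointed if $K\cap(-K)=\{0\}$, generating if $K-K=\mathbb{R}^m$; a proper cone is a generating, closed, convex, pointed cone. The dual of $K$ is $K^*=\{y:\langle x,y\rangle\ge 0\ \forall x\in K\}$. $K$ is subdual if $K\subset K^*$. For a cone $L$, $x\le_L y$ means $y-x\in L$. For a nonempty closed convex set $D$, $P_D$ denotes the metric (nearest-point) projection onto $D$. $D$ is called an $L$-isotone projection set ($L$-isotone) if $x\le_L y$ implies $P_Dx\le_L P_Dy$ for all $x,y\in\mathbb{R}^m$. *)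

(* Defs.v *)
(* R^m is modelled as 'rV[R]_m for
   R : realType, with its library topology (product/max-norm topology,
   which coincides with the Euclidean one). *)
From HB Require Import structures.
From mathcomp Require Import all_boot all_order all_algebra.
From mathcomp Require Import all_classical all_reals all_analysis.
Set Implicit Arguments. Unset Strict Implicit. Unset Printing Implicit Defensive.
Import Order.TTheory GRing.Theory Num.Theory.
Import numFieldNormedType.Exports.
Local Open Scope classical_set_scope.
Local Open Scope ring_scope.

Section Cones.
Variables (R : realType) (m : nat).
Notation V := 'rV[R]_m.

Definition dotp (x y : V) : R := \sum_(i < m) x ord0 i * y ord0 i.

Definition convex_cone (K : set V) : Prop :=
  K !=set0 /\
  (forall x y, K x -> K y -> K (x + y)) /\
  (forall (t : R) x, 0 <= t -> K x -> K (t *: x)).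

Definition pointed_cone (K : set V) : Prop :=
  K `&` [set x | K (- x)] = [set 0].

Definition generating_cone (K : set V) : Prop :=
  forall z : V, exists x y, K x /\ K y /\ z = x - y.

Definition proper_cone (K : set V) : Prop :=
  convex_cone K /\ generating_cone K /\ closed K /\ pointed_cone K.

Definition dual_cone (K : set V) : set V :=
  [set y | forall x, K x -> 0 <= dotp x y].

Definition subdual (K : set V) : Prop := K `<=` dual_cone K.

Definition is_metric_proj (D : set V) (x p : V) : Prop :=
  D p /\ forall y, D y -> dotp (x - p) (x - p) <= dotp (x - y) (x - y).

Definition isotone_proj_set (L D : set V) : Prop :=
  forall x y px py, L (y - x) ->
    is_metric_proj D x px -> is_metric_proj D y py -> L (py - px).

End Cones.

(* Main.v *)
Require Import Defs.
From HB Require Import structures.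
From mathcomp Require Import all_boot all_order all_algebra.
From mathcomp Require Import all_classical all_reals all_analysis.
From mathcomp Require Import ring lra.
Set Implicit Arguments. Unset Strict Implicit. Unset Printing Implicit Defensive.
Import Order.TTheory GRing.Theory Num.Theory.
Import numFieldNormedType.Exports.
Local Open Scope classical_set_scope.
Local Open Scope ring_scope.

Section Aux.
Variables (R : realType) (m : nat).
Notation V := 'rV[R]_m.
Implicit Types x y z : V.

Lemma dotpC x y : dotp x y = dotp y x.
Proof. by apply: eq_bigr => i _; rewrite mulrC. Qed.
Lemma dotpDl x y z : dotp (x + y) z = dotp x z + dotp y z.
Proof. by rewrite /dotp -big_split; apply: eq_bigr => i _; rewrite !mxE mulrDl. Qed.
Lemma dotpNl x z : dotp (- x) z = - dotp x z.
Proof. by rewrite /dotp -sumrN; apply: eq_bigr => i _; rewrite !mxE mulNr. Qed.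
Lemma dotpZl (a : R) x z : dotp (a *: x) z = a * dotp x z.
Proof. by rewrite /dotp mulr_sumr; apply: eq_bigr => i _; rewrite !mxE mulrA. Qed.
Lemma dotpBl x y z : dotp (x - y) z = dotp x z - dotp y z.
Proof. by rewrite dotpDl dotpNl. Qed.
Lemma dotpDr x y z : dotp z (x + y) = dotp z x + dotp z y.
Proof. by rewrite dotpC dotpDl !(dotpC z). Qed.
Lemma dotpNr x z : dotp z (- x) = - dotp z x.
Proof. by rewrite dotpC dotpNl dotpC. Qed.
Lemma dotpZr (a : R) x z : dotp z (a *: x) = a * dotp z x.
Proof. by rewrite dotpC dotpZl dotpC. Qed.
Lemma dotpBr x y z : dotp z (x - y) = dotp z x - dotp z y.
Proof. by rewrite dotpDr dotpNr. Qed.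
Lemma dotp0l z : dotp 0 z = 0.
Proof. by rewrite -(scale0r 0) dotpZl mul0r. Qed.
Lemma dotp0r z : dotp z 0 = 0.
Proof. by rewrite dotpC dotp0l. Qed.
Lemma dotp_ge0 x : 0 <= dotp x x.
Proof. by apply: sumr_ge0 => i _; rewrite -expr2 sqr_ge0. Qed.
Lemma dotp_eq0 x : dotp x x = 0 -> x = 0.
Proof.
move=> /eqP; rewrite psumr_eq0; last by move=> i _; rewrite -expr2 sqr_ge0.
move=> /allP H; apply/rowP => i; rewrite mxE.
have := H i; rewrite mem_index_enum => /(_ isT) /=.
by rewrite mulf_eq0 orbb => /eqP.
Qed.

Lemma cont_sum (F : 'I_m -> V -> R) :
  (forall i, continuous (F i)) -> continuous (fun y => \sum_(i < m) F i y).
Proof.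
move=> cF; rewrite unlock /=; elim: (index_enum _) => [|i s IH] /=.
  exact: cst_continuous.
by move=> y; apply: (@continuousD _ _ _ (F i) (fun y => _)); [exact: cF|exact: IH].
Qed.

Lemma sqdist_cont x : continuous (fun y => dotp (x - y) (x - y)).
Proof.
apply: cont_sum => i y.
apply: (@continuousM _ _ (fun y : V => (x - y) ord0 i) (fun y : V => (x - y) ord0 i)).
  have -> : (fun y : V => (x - y) ord0 i) = (fun y : V => x ord0 i - y ord0 i).
    by apply: funext => z; rewrite !mxE.
  by apply: (@continuousB _ _ _ (fun=> x ord0 i) (fun y : V => y ord0 i));
    [exact: cst_continuous | exact: coord_continuous].
have -> : (fun y : V => (x - y) ord0 i) = (fun y : V => x ord0 i - y ord0 i).
  by apply: funext => z; rewrite !mxE.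
by apply: (@continuousB _ _ _ (fun=> x ord0 i) (fun y : V => y ord0 i));
  [exact: cst_continuous | exact: coord_continuous].
Qed.

Lemma sqB (u v : V) : dotp (u - v) (u - v) = dotp u u - 2 * dotp u v + dotp v v.
Proof.
rewrite dotpBl !dotpBr (dotpC v u).
have -> : (2:R) * dotp u v = dotp u v + dotp u v by ring.
rewrite opprD addrA; ring.
Qed.

Lemma term_le x i : x ord0 i * x ord0 i <= dotp x x.
Proof.
rewrite /dotp (bigD1 i) //= lerDl; apply: sumr_ge0 => j _.
by rewrite -expr2 sqr_ge0.
Qed.

Lemma proj_exists (K : set V) : closed K -> K 0 ->
  forall x, exists p, is_metric_proj K x p.
Proof.
move=> Kcl K0 x.
set T := dotp x x.
have T0 : 0 <= T by exact: dotp_ge0.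
pose B := [set v : V | forall i,
  `[x ord0 i - (T+1), x ord0 i + (T+1)]%classic (v ord0 i)].
have cB : compact B.
  by apply: (@rV_compact _ _ (fun i => `[x ord0 i - (T+1), x ord0 i + (T+1)]%classic)) => i; exact: segment_compact.
have cA : compact (B `&` K) by apply: compact_closedI.
have B0 : B 0.
  move=> i /=; rewrite in_itv /= mxE.
  have := term_le x i; rewrite -/T => h.
  apply/andP; split; nra.
have A0 : (B `&` K) !=set0 by exists 0.
have [c cA' cmin] := EVT_min_rV A0 cA (continuous_subspaceT (@sqdist_cont x)).
move: cA'; rewrite inE => -[cB' cK].
have fc : dotp (x - c) (x - c) <= T.
  have h0 : (0:V) \in B `&` K by rewrite inE.
  by have := cmin 0 h0; rewrite subr0.
exists c; split => // y Ky.
have [yB|yB] := pselect (B y); first by apply: cmin; rewrite inE.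
move: yB => /existsNP [i /= Hi].
have Hi' : ~~ (x ord0 i - (T + 1) <= y ord0 i <= x ord0 i + (T + 1)).
  by apply/negP => h; apply: Hi; rewrite in_itv /=.
have := term_le (x - y) i; rewrite !mxE => h.
rewrite negb_and -!ltNge in Hi'.
apply: (le_trans fc).
case/orP: Hi' => Hy; nra.
Qed.

Lemma var_ineq (K : set V) x p : convex_cone K ->
  is_metric_proj K x p -> forall y, K y -> dotp (x - p) y <= 0.
Proof.
move=> [_ [Kadd Ksc]] [Kp Hp] y Ky.
rewrite leNgt; apply/negP => c0.
set c := dotp (x - p) y.
set d := dotp y y.
have d0 : 0 <= d by exact: dotp_ge0.
set t := c / (d + 1).
have t0 : 0 < t by rewrite divr_gt0 // ltr_wpDl.
have := Hp (p + t *: y) (Kadd _ _ Kp (Ksc _ _ (ltW t0) Ky)).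
have -> : x - (p + t *: y) = (x - p) - t *: y by rewrite opprD addrA.
move: c0; rewrite -/c => c0.
rewrite (sqB (x - p)) dotpZr dotpZl -/c -/d.
have htd : t * (d + 1) = c by rewrite /t mulfVK // gt_eqF // ltr_wpDl.
rewrite dotpZr -/d; nra.
Qed.

Lemma int_dir (K : set V) w : interior (dual_cone K) w ->
  forall z, exists2 s : R, 0 < s & dual_cone K (w + s *: z).
Proof.
rewrite /interior /= => /nbhs_ballP [e e0 He] z.
have n0 : 0 < `|z| + 1 by rewrite ltr_wpDl.
exists (e / (2 * (`|z| + 1))); first by rewrite divr_gt0 // mulr_gt0.
apply: He; rewrite -ball_normE /= opprD addrA subrr sub0r normrN normrZ.
rewrite ger0_norm; last by rewrite divr_ge0 ?(ltW e0) // mulr_ge0 // ltW.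
set s := e / _.
have hs : s * (2 * (`|z| + 1)) = e by rewrite /s mulfVK // gt_eqF // mulr_gt0.
have s0 : 0 < s by rewrite /s divr_gt0 // mulr_gt0.
have := normr_ge0 z; nra.
Qed.

Lemma dualZ (K : set V) a y : 0 <= a -> dual_cone K y -> dual_cone K (a *: y).
Proof. by move=> a0 hy x Kx; rewrite dotpZr mulr_ge0 // hy. Qed.

End Aux.

Theorem theorem4 (R : realType) (m : nat) (K L : set 'rV[R]_m) :
  proper_cone K -> proper_cone L ->
  isotone_proj_set L K ->
  ((interior (dual_cone K) `&` L) !=set0 \/
   (interior (dual_cone K) `&` dual_cone L) !=set0) ->
  subdual K /\ K `<=` L /\ L `<=` dual_cone K.
Proof.
move=> [[[k0 Kk0] [Kadd Ksc]] [Kgen [Kcl Kpt]]]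
  [[[l0 Ll0] [Ladd Lsc]] [Lgen [Lcl Lpt]]] Hiso Hint.
have K0 : K 0 by rewrite -(scale0r k0); apply: Ksc.
have Kcc : convex_cone K by split; [exists k0|split].
have ptL : forall a, L a -> L (- a) -> a = 0.
  by move=> a h1 h2; have : ([set 0] : set 'rV[R]_m) a by rewrite -Lpt; split.
have projK : forall k, K k -> is_metric_proj K k k.
  by move=> k Kk; split=> // y _; rewrite subrr dotp0l; exact: dotp_ge0.
have proj0 : forall z, dual_cone K (- z) -> is_metric_proj K z 0.
  move=> z hz; split=> // y Ky; rewrite subr0 sqB.
  have := hz y Ky; rewrite dotpNr (dotpC y z) => h.
  have := dotp_ge0 y; lra.
have LK : L `<=` dual_cone K -> K `<=` L.
  move=> HL k Kk; have [l1 [l2 [Ll1 [Ll2 kE]]]] := Lgen k.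
  have := Hiso (- l2) k 0 k; rewrite subr0; apply.
  - by rewrite opprK kE subrK.
  - by apply: proj0; rewrite opprK; exact: HL.
  - exact: projK.
have key : forall l, L l -> exists a, [/\ K a, L (- a) & (a = 0 -> dual_cone K l)].
  move=> l Ll; have [a Ha] := proj_exists Kcl K0 (- l).
  exists a; split; first by case: Ha.
    have := Hiso (- l) 0 a 0; rewrite !sub0r; apply => //.
      by rewrite opprK.
    exact: projK.
  move=> a0; rewrite a0 in Ha => y Ky.
  have := var_ineq Kcc Ha Ky; rewrite subr0 dotpNl (dotpC l y) oppr_le0; apply.
have KL : K `<=` L -> L `<=` dual_cone K.
  move=> HK l Ll; have [a [Ka La H0]] := key l Ll.
  by apply: H0; apply: ptL => //; exact: HK.
case: Hint => [[w [wI Lw]] | [w [wI Lw]]].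
- have HK : K `<=` L.
    move=> k Kk; have [s s0 hs] := int_dir wI (- k).
    have hd : dual_cone K (s^-1 *: w - k).
      have si : 0 < s^-1 by rewrite invr_gt0.
      have := dualZ (ltW si) hs.
      by rewrite scalerDr scalerA mulVf ?gt_eqF // scale1r.
    have := Hiso (k - s^-1 *: w) k 0 k; rewrite subr0; apply.
    - by rewrite opprB addrC subrK; apply: Lsc => //; rewrite invr_ge0 ltW.
    - by apply: proj0; rewrite opprB.
    - exact: projK.
  have HL := KL HK.
  by split => // k Kk; apply: HL; exact: HK.
- have HL : L `<=` dual_cone K.
    move=> l Ll; have [a [Ka La H0]] := key l Ll; apply: H0.
    have wK : dual_cone K w by exact: interior_subset.
    have h1 := wK a Ka.
    have h2 := Lw _ La; rewrite dotpNl in h2.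
    have [s s0 hs] := int_dir wI (- a).
    have := hs a Ka; rewrite dotpDr dotpZr dotpNr => h3.
    have := dotp_ge0 a => h4.
    apply: dotp_eq0; nra.
  have HK := LK HL.
  by split => // k Kk; apply: HL; exact: HK.
Qed.
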